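(* Let $n,m\in\mathbb{N}$ with $2\le m\le n-1$, let $H(\psi),H(\chi)\in Z_{n,m}$, and let $U_m$ be the stabiliser of $1$ in $S_m$. Then: (i) $H(\psi)\cong H(\chi)$ if and only if $\psi$ and $\chi$ lie in the same orbit of the power group $S_{[n]\setminus[m]}^{\times 2}\times U_m$; (ii) $H(\psi)$ and $H(\chi)$ are isomorphic or anti-isomorphic if and only if $\psi$ and $\chi$ lie in the same orbit of the power group $2S_{[n]\setminus[m]}^{\times 2}\times U_m$; (iii) if moreover $H(\psi)$ and $H(\chi)$ are commutative, then $H(\psi)\cong H(\chi)$ if and only if $\psi'$ and $\chi'$ lie in the same orbit of the power group $S_{[n]\setminus[m]}^{\{2\}}\times U_m$.
   Context: $[n]=\{1,\ldots,n\}$. For $\psi:([n]\setminus[m])\times([n]\setminus[m])\to[m]$, $H(\psi)$ is $[n]$ with $xy=\psi(x,y)$ for $x,y\in[n]\setminus[m]$ and $xy=1$ otherwise; $Z_{n,m}$ is the set of $H(\psi)$ with $[m]\setminus\{1\}\subseteq\operatorname{im}\psi$. If $H(\psi)$ is commutative, $\psi'$ is the function on subsets of $[n]\setminus[m]$ of size $1$ or $2$ given by $\psi'\{i,j\}=\psi(i,j)$. An anti-isomorphism $S\to T$ is a bijection $f$ with $f(xy)=f(y)f(x)$. Power group: if groups $A$ and $B$ act on finite sets $X$ and $Y$, then $A\times B$ acts on functions $f:X\to Y$ by $f^{(\alpha,\beta)}(x)=(f(x^\alpha))^\beta$. Actions on $X=[n]\setminus[m]$: $S_X^{\times 2}$ is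 $S_X$ acting on $X\times X$ by $(x_1,x_2)^\alpha=(x_1^\alpha,x_2^\alpha)$; $2S_X^{\times 2}$ is $S_2\times S_X$ acting on $X\times X$ by $(x_1,x_2)^{(\pi,\alpha)}=(x_{1^\pi}^\alpha,x_{2^\pi}^\alpha)$; $S_X^{\{2\}}$ is $S_X$ acting on the set of subsets of $X$ of size $1$ or $2$ by $\{x_1,x_2\}^\alpha=\{x_1^\alpha,x_2^\alpha\}$. $U_m$ acts naturally on $[m]$. *)

(* Defs.v *)
From mathcomp Require Import all_boot all_fingroup.
Set Implicit Arguments. Unset Strict Implicit. Unset Printing Implicit Defensive.

(* Convention: [n] = {1,...,n} is represented by 'I_n = {0,...,n-1} via
   i+1 <-> i.  Thus [m] is 'I_m (element "1" is the ordinal with value 0),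
   and X = [n] \ [m] is the subtype {i : 'I_n | m <= i}. *)
Notation Xt n m := {i : 'I_n | m <= i}.

(* H(psi): multiplication on 'I_n; xy = psi(x,y) if x,y in X, else "1" (= 0). *)
Definition Hmul (n m : nat) (psi : Xt n m -> Xt n m -> 'I_m) (x y : 'I_n) : 'I_n :=
  insubd x (match (insub x : option (Xt n m)), (insub y : option (Xt n m)) with
            | Some x', Some y' => val (psi x' y')
            | _, _ => 0
            end).

Definition inZ (n m : nat) (psi : Xt n m -> Xt n m -> 'I_m) : Prop :=
  forall k : 'I_m, val k <> 0 -> exists x y, psi x y = k.

Definition commutative_mul (T : Type) (mul : T -> T -> T) : Prop :=
  forall x y, mul x y = mul y x.

Definition sg_isomorphic (T : Type) (mul1 mul2 : T -> T -> T) : Prop :=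
  exists f : T -> T, bijective f /\ forall x y, f (mul1 x y) = mul2 (f x) (f y).

Definition sg_anti_isomorphic (T : Type) (mul1 mul2 : T -> T -> T) : Prop :=
  exists f : T -> T, bijective f /\ forall x y, f (mul1 x y) = mul2 (f y) (f x).

Definition in_Um (m : nat) (b : {perm 'I_m}) : Prop :=
  forall k : 'I_m, val k = 0 -> b k = k.

Definition orbit_SX2_Um (n m : nat) (psi chi : Xt n m -> Xt n m -> 'I_m) : Prop :=
  exists (a : {perm Xt n m}) (b : {perm 'I_m}),
    in_Um b /\ forall x1 x2, chi x1 x2 = b (psi (a x1) (a x2)).

(* select the i-th coordinate of the pair (x1,x2), i : 'I_2 (0 <-> 1, 1 <-> 2) *)
Definition sel2 (T : Type) (x1 x2 : T) (i : 'I_2) : T :=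
  if val i == 0 then x1 else x2.

Definition orbit_2SX2_Um (n m : nat) (psi chi : Xt n m -> Xt n m -> 'I_m) : Prop :=
  exists (p : {perm 'I_2}) (a : {perm Xt n m}) (b : {perm 'I_m}),
    in_Um b /\ forall x1 x2,
      chi x1 x2 = b (psi (a (sel2 x1 x2 (p ord0))) (a (sel2 x1 x2 (p ord_max)))).

(* psi' : subsets of X of size 1 or 2 -> [m],  psi'{i,j} = psi(i,j);
   None outside the domain (sets not of size 1 or 2). *)
Definition psi' (n m : nat) (psi : Xt n m -> Xt n m -> 'I_m) (S : {set Xt n m})
  : option 'I_m :=
  match enum S with
  | [:: i] => Some (psi i i)
  | [:: i; j] => Some (psi i j)
  | _ => None
  end.

Definition orbit_SX2set_Um (n m : nat) (f g : {set Xt n m} -> option 'I_m) : Prop :=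
  exists (a : {perm Xt n m}) (b : {perm 'I_m}),
    in_Um b /\ forall S : {set Xt n m}, (#|S| == 1) || (#|S| == 2) ->
      g S = omap b (f (a @: S)).

(* Main.v *)
Require Import Defs.
From mathcomp Require Import all_boot all_fingroup.
From mathcomp Require Import zify.

Lemma Hmul_val n m (psi : Xt n m -> Xt n m -> 'I_m) (hmn : m < n) (x y : 'I_n) :
  val (Hmul psi x y) = match (insub x : option (Xt n m)), (insub y : option (Xt n m)) with
            | Some x', Some y' => val (psi x' y')
            | _, _ => 0
            end.
Proof.
rewrite /Hmul insubdK //.
case: (insub x) => [x'|]; last by rewrite unfold_in /=; lia.
case: (insub y) => [y'|]; last by rewrite unfold_in /=; lia.
by rewrite unfold_in /=; have := ltn_ord (psi x' y'); lia.
Qed.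

Lemma HmulXX n m (psi : Xt n m -> Xt n m -> 'I_m) (hmn : m < n) (x y : Xt n m) :
  val (Hmul psi (val x) (val y)) = val (psi x y).
Proof. by rewrite Hmul_val // !valK. Qed.

Lemma Hmul_lt n m (psi : Xt n m -> Xt n m -> 'I_m) (hm : 0 < m) (hmn : m < n) x y :
  val (Hmul psi x y) < m.
Proof.
rewrite Hmul_val //.
case: (insub x) => [x'|] //; case: (insub y) => [y'|] //; exact: ltn_ord.
Qed.

Lemma Hmul_nXl n m (psi : Xt n m -> Xt n m -> 'I_m) (hmn : m < n) (x y : 'I_n) :
  val x < m -> val (Hmul psi x y) = 0.
Proof.
move=> hx; rewrite Hmul_val // insubN //; rewrite -ltnNge //.
Qed.

Lemma Hmul_nXr n m (psi : Xt n m -> Xt n m -> 'I_m) (hmn : m < n) (x y : 'I_n) :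
  val y < m -> val (Hmul psi x y) = 0.
Proof.
move=> hy; rewrite Hmul_val //; case: (insub x) => [x'|] //.
rewrite insubN //; rewrite -ltnNge //.
Qed.

Lemma HmulT n m (chi : Xt n m -> Xt n m -> 'I_m) (hmn : m < n) (x y : 'I_n) :
  Hmul (fun a b => chi b a) x y = Hmul chi y x.
Proof.
apply: val_inj; rewrite !Hmul_val //.
by case: (insub x) => [x'|] //; case: (insub y) => [y'|].
Qed.

Lemma iso_iff n m (hm : 0 < m) (hmn : m < n) (psi chi : Xt n m -> Xt n m -> 'I_m)
  (hpsi : inZ psi) :
  sg_isomorphic (Hmul psi) (Hmul chi) <-> orbit_SX2_Um psi chi.
Proof.
have le_mn : m <= n := ltnW hmn.
pose z0 : 'I_m := Ordinal hm.
pose z : 'I_n := widen_ord le_mn z0.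
split.
- case=> f [fbij fH].
  have finj := bij_inj fbij.
  have Hz : forall y, Hmul psi z y = z.
    by move=> y; apply: val_inj; rewrite Hmul_nXl.
  have fz : val (f z) = 0.
    have e : f z = Hmul chi (f z) (f z) by rewrite -fH Hz.
    have lt : val (f z) < m by rewrite e; apply: Hmul_lt.
    by rewrite e Hmul_nXl.
  have fI : forall k : 'I_m, val (f (widen_ord le_mn k)) < m.
    move=> k; case: (eqVneq (val k) 0) => [k0|k0].
      have -> : widen_ord le_mn k = z by apply: val_inj; rewrite /= k0.
      by rewrite fz.
    have [x [y e]] : exists x y, psi x y = k by apply: hpsi; apply/eqP.
    have -> : widen_ord le_mn k = Hmul psi (val x) (val y).
      by apply: val_inj; rewrite HmulXX // e.
    by rewrite fH; apply: Hmul_lt.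
  pose g (k : 'I_m) : 'I_m := Ordinal (fI k).
  have ginj : injective g.
    move=> k1 k2 /(congr1 val) /= /val_inj /finj /(congr1 val) /= e.
    exact: val_inj.
  pose b := perm ginj.
  case: fbij => finv fK finvK.
  have aX : forall x : Xt n m, m <= finv (val x).
    move=> x; rewrite leqNgt; apply/negP => lt.
    have := fI (Ordinal lt).
    have -> : widen_ord le_mn (Ordinal lt) = finv (val x) by apply: val_inj.
    rewrite finvK; have h : m <= val (val x) := valP x.
    move: h; lia.
  pose a0 (x : Xt n m) : Xt n m := insubd x (finv (val x)).
  have a0E : forall x, val (a0 x) = finv (val x).
    by move=> x; rewrite insubdK // unfold_in; exact: aX.
  have a0inj : injective a0.
    by move=> x y /(congr1 val); rewrite !a0E => /(can_inj finvK)/val_inj.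
  exists (perm a0inj), b; split.
  + move=> k k0; apply: val_inj; rewrite permE /=.
    have -> : widen_ord le_mn k = z by apply: val_inj; rewrite /= k0.
    by rewrite fz k0.
  + move=> x1 x2; apply: val_inj; rewrite !permE /=.
    have -> : widen_ord le_mn (psi (a0 x1) (a0 x2)) = Hmul psi (val (a0 x1)) (val (a0 x2)).
      by apply: val_inj; rewrite /= HmulXX.
    by rewrite fH !a0E !finvK HmulXX.
- case=> a [b [bU hab]].
  pose f (x : 'I_n) : 'I_n := match (insub x : option (Xt n m)) with
    | Some x' => val ((a^-1)%g x')
    | None => match (insub (val x) : option 'I_m) with
              | Some k => widen_ord le_mn (b k) | None => x end end.
  have fX : forall x' : Xt n m, f (val x') = val ((a^-1)%g x').
    by move=> x'; rewrite /f valK.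
  have fI : forall k : 'I_m, f (widen_ord le_mn k) = widen_ord le_mn (b k).
    move=> k; rewrite /f insubN; last by rewrite /= -ltnNge.
    by rewrite /= valK.
  have f0 : forall x, val x = 0 -> val (f x) = 0.
    move=> x x0; have -> : x = widen_ord le_mn z0 by apply: val_inj.
    by rewrite fI /= bU.
  have cover : forall x : 'I_n, (exists x' : Xt n m, x = val x') \/
                                (exists k : 'I_m, x = widen_ord le_mn k).
    move=> x; case: (leqP m x) => h; [left; exists (Sub x h) | right; exists (Ordinal h)];
      by apply: val_inj.
  have finj : injective f.
    move=> x y; case: (cover x) => [[x' ->]|[k ->]]; case: (cover y) => [[y' ->]|[l ->]];
      rewrite ?fX ?fI.
    + by move/val_inj/perm_inj ->.
    + move=> e; have h : m <= val (val ((a^-1)%g x')) := valP ((a^-1)%g x').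
      move: h; rewrite e /=; have := ltn_ord (b l); lia.
    + move=> e; have h : m <= val (val ((a^-1)%g y')) := valP ((a^-1)%g y').
      move: h; rewrite -e /=; have := ltn_ord (b k); lia.
    + by move/(congr1 val) => /= /val_inj /perm_inj ->.
  exists f; split; first exact: injF_bij.
  move=> x y; apply: val_inj.
  case: (cover x) => [[x' ->]|[k ->]].
  + case: (cover y) => [[y' ->]|[l ->]].
    * have -> : Hmul psi (val x') (val y') = widen_ord le_mn (psi x' y').
        by apply: val_inj; rewrite HmulXX.
      by rewrite fI !fX /= HmulXX // hab !permKV.
    * rewrite fX fI [RHS](@Hmul_nXr _ _ _ hmn) /=; last exact: ltn_ord.
      by rewrite f0 // Hmul_nXr //=.
  + rewrite [f (widen_ord _ k)]fI [RHS](@Hmul_nXl _ _ _ hmn) /=; last exact: ltn_ord.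
    by rewrite f0 // Hmul_nXl //=.
Qed.

Lemma anti_iff n m (hmn : m < n) (psi chi : Xt n m -> Xt n m -> 'I_m) :
  sg_anti_isomorphic (Hmul psi) (Hmul chi) <->
  sg_isomorphic (Hmul psi) (Hmul (fun a b => chi b a)).
Proof.
split; case=> f [fb fH]; exists f; split=> // x y; rewrite fH HmulT //.
Qed.

Lemma I2_lem (i j : 'I_2) : i != j -> (val i == 0) = ~~ (val j == 0).
Proof. by case: i j => [[|[|?]] ?] [[|[|?]] ?]. Qed.

Lemma psi'_pair n m (psi : Xt n m -> Xt n m -> 'I_m) :
  (forall x y, psi x y = psi y x) -> forall i j, psi' psi [set i; j] = Some (psi i j).
Proof.
move=> pc i j; rewrite /psi'; case: (eqVneq i j) => [<-|ij].
  by rewrite setUid enum_set1.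
have hs : size (enum [set i; j]) = 2 by rewrite -cardE cards2 ij.
have hm := mem_enum [set i; j].
have hu := enum_uniq [set i; j].
case E: (enum [set i; j]) hs hu => [|u [|v [|w s]]] // _ hu'.
have Hu : u \in [set i; j] by rewrite -mem_enum E mem_head.
have Hv : v \in [set i; j] by rewrite -mem_enum E !inE eqxx orbT.
move: hu'; rewrite /= inE andbT.
rewrite !inE in Hu Hv.
by case/orP: Hu => /eqP ->; case/orP: Hv => /eqP -> //; rewrite ?eqxx // pc.
Qed.

Lemma card12 (T : finType) (S : {set T}) :
  (#|S| == 1) || (#|S| == 2) -> exists i j, S = [set i; j].
Proof.
case/orP => [/cards1P [x ->]|/cards2P [x [y [_ ->]]]]; last by exists x, y.
by exists x, x; rewrite setUid.
Qed.

Theorem lemma6p2 (n m : nat) (hm2 : 2 <= m) (hmn : m <= n - 1)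
    (psi chi : Xt n m -> Xt n m -> 'I_m)
    (hpsi : inZ psi) (hchi : inZ chi) :
  (sg_isomorphic (Hmul psi) (Hmul chi) <-> orbit_SX2_Um psi chi) /\
  (sg_isomorphic (Hmul psi) (Hmul chi) \/ sg_anti_isomorphic (Hmul psi) (Hmul chi)
     <-> orbit_2SX2_Um psi chi) /\
  (commutative_mul (Hmul psi) -> commutative_mul (Hmul chi) ->
     (sg_isomorphic (Hmul psi) (Hmul chi) <-> orbit_SX2set_Um (psi' psi) (psi' chi))).
Proof.
have hm : 0 < m by lia.
have hmn' : m < n by lia.
split; first exact: iso_iff.
split.
  rewrite anti_iff // !iso_iff //.
  split.
    case=> [[a [b [bU h]]]|[a [b [bU h]]]].
      by exists 1%g, a, b; split=> // x1 x2; rewrite !perm1 /=; exact: h.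
    exists (tperm ord0 ord_max), a, b; split=> // x1 x2; rewrite tpermL tpermR /=.
    exact: h.
  case=> p [a [b [bU h]]].
  have hp : (val (p ord0) == 0) = ~~ (val (p ord_max) == 0).
    by apply: I2_lem; rewrite (inj_eq perm_inj).
  move: h; rewrite /sel2 hp; case: (val (p ord_max) == 0) => /= h.
    by right; exists a, b; split=> // x1 x2; exact: h x2 x1.
  by left; exists a, b; split=> // x1 x2; exact: h.
move=> cpsi cchi; rewrite iso_iff //.
have comm : forall (phi : Xt n m -> Xt n m -> 'I_m), commutative_mul (Hmul phi) ->
    forall x y, phi x y = phi y x.
  move=> phi cphi x y; apply: val_inj; rewrite -!HmulXX //; congr val; exact: cphi.
have pc := comm _ cpsi; have cc := comm _ cchi.
split.
  case=> a [b [bU h]]; exists a, b; split=> // S /card12 [i [j ->]].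
  by rewrite imsetU1 imset_set1 !psi'_pair //= h.
case=> a [b [bU h]]; exists a, b; split=> // x1 x2.
have hc : (#|[set x1; x2]| == 1) || (#|[set x1; x2]| == 2).
  by rewrite cards2; case: (x1 != x2).
move: (h _ hc); rewrite imsetU1 imset_set1 !psi'_pair //=.
by case.
Qed.
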